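(* Let $(B,+,\circ)$ be a left brace with Yang–Baxter map $r$ and let $c\in B$ be central in $(B,\circ)$. Then the map (1) $k_{1,n}(x)=c\circ x-c+n\,x$, for each $n\in\mathbb Z$, is $\mathcal G(B,r)$-equivariant. If moreover $2\,(c\circ b)=2b+2c$ for all $b\in B$, then the following maps $B\to B$ are also $\mathcal G(B,r)$-equivariant: (2) $k_{2,n}(x)=c\circ x+c+n\,x$, for each $n\in\mathbb Z$; (3) $\widetilde k_m(x)=c^{2m}\circ x+c^{2m}+2\sum_{j=1}^{m-1}c^{2j}-2\sum_{j=1}^{m}c^{2j-1}$, for each integer $m\ge1$; (4) $\widehat k_m(x)=c^{2m}\circ x-c^{2m}-2\sum_{j=1}^{m-1}c^{2j}+2\sum_{j=1}^{m}c^{2j-1}$, for each integer $m\ge1$; (5) $l_{m,n}(x)=2m\,c+(2m+n)\,x$, for each integer $m\ge1$ and $n\in\mathbb Z$.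
   Context: A (left) brace is a triple $(B,+,\circ)$ such that $(B,+)$ is an abelian group with identity $0$, $(B,\circ)$ is a group, and $x\circ(y+z)=x\circ y+x\circ z-x$ for all $x,y,z\in B$. The Yang–Baxter map is $r(x,y)=(\sigma_x(y),\tau_y(x))$ with $\sigma_x(y)=x\circ y-x$ and $\tau_y(x)=(\sigma_x(y))^{-1}\circ x-(\sigma_x(y))^{-1}$. A map $k:B\to B$ is $\mathcal G(B,r)$-equivariant if $k\sigma_x=\sigma_x k$ for all $x\in B$. Powers $c^j$ are taken in the group $(B,\circ)$; $n\,x$ for $n\in\mathbb Z$ denotes the $n$-th multiple in $(B,+)$; empty sums are $0$. *)

(* Defs.v *)
From mathcomp Require Import all_boot all_order all_algebra.
Set Implicit Arguments. Unset Strict Implicit. Unset Printing Implicit Defensive.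
Import GRing.Theory.
Local Open Scope ring_scope.

Record brace (B : zmodType) := Brace {
  circ : B -> B -> B;
  cinv : B -> B;
  cone : B;
  circA : forall x y z, circ x (circ y z) = circ (circ x y) z;
  circ1l : forall x, circ cone x = x;
  circ1r : forall x, circ x cone = x;
  circVl : forall x, circ (cinv x) x = cone;
  circVr : forall x, circ x (cinv x) = cone;
  brace_compat : forall x y z, circ x (y + z) = circ x y + circ x z - x
}.

Definition sigma (B : zmodType) (Br : brace B) (x y : B) : B := circ Br x y - x.

(* k is G(B,r)-equivariant: k o sigma_x = sigma_x o k for all x *)
Definition equivariant (B : zmodType) (Br : brace B) (k : B -> B) : Prop :=
  forall x y, k (sigma Br x y) = sigma Br x (k y).

Definition cpow (B : zmodType) (Br : brace B) (c : B) (j : nat) : B :=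
  iter j (circ Br c) (cone Br).

(* Main.v *)
Require Import Defs.
From mathcomp Require Import all_boot all_order all_algebra.
Import GRing.Theory.
Local Open Scope ring_scope.

Section S.
Variables (B : zmodType) (Br : brace B).

Lemma circ0 x : circ Br x 0 = x.
Proof.
have h := brace_compat Br x 0 0; rewrite addr0 -addrA in h.
have : circ Br x 0 + 0 = circ Br x 0 + (circ Br x 0 - x) by rewrite addr0.
by move/addrI/esym/eqP; rewrite subr_eq0 => /eqP.
Qed.

Lemma cone0 : cone Br = 0.
Proof. by rewrite -(circ1l Br 0) circ0. Qed.

Lemma sigmaD x y z : sigma Br x (y + z) = sigma Br x y + sigma Br x z.
Proof. by rewrite /sigma brace_compat [RHS]addrACA addrA. Qed.

Lemma sigma0 x : sigma Br x 0 = 0.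
Proof. by rewrite /sigma circ0 subrr. Qed.

Lemma sigmaN x y : sigma Br x (- y) = - sigma Br x y.
Proof.
apply/eqP; rewrite -subr_eq0 opprK -sigmaD addrC subrr sigma0 //.
Qed.

Lemma sigmaMn x y n : sigma Br x (y *+ n) = sigma Br x y *+ n.
Proof. elim: n => [|n IH]; by rewrite ?sigma0 // !mulrS sigmaD IH. Qed.

Lemma sigmaMz x y n : sigma Br x (y *~ n) = sigma Br x y *~ n.
Proof. case: n => n; by rewrite ?NegzE ?mulrNz /= ?sigmaN sigmaMn. Qed.

Definition fixedc a := forall x, sigma Br x a = a.

Lemma fixedD a b : fixedc a -> fixedc b -> fixedc (a + b).
Proof. by move=> ha hb x; rewrite sigmaD ha hb. Qed.
Lemma fixedN a : fixedc a -> fixedc (- a).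
Proof. by move=> ha x; rewrite sigmaN ha. Qed.
Lemma fixed0 : fixedc 0.
Proof. exact: sigma0. Qed.

Lemma circN d x : circ Br d (- x) = d *+ 2 - circ Br d x.
Proof.
have h := brace_compat Br d x (- x); rewrite subrr circ0 in h.
have h2 : circ Br d x + circ Br d (- x) = d + d by rewrite {3}h subrK.
by rewrite mulr2n -h2 addrC addKr.
Qed.

Lemma hlp (a u v : B) : u + (a *+ 2 - v) - a - a = u - v.
Proof. by rewrite mulr2n -!addrA; congr (_ + _); rewrite [- v + _]addrCA addNKr addrCA subrr addr0. Qed.

Lemma fd d (hd : forall b, circ Br d b = circ Br b d) x y :
  sigma Br x (circ Br d y - d) = circ Br d (sigma Br x y) - d.
Proof.
rewrite /sigma (brace_compat Br x (circ Br d y) (-d)) circN hlp.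
rewrite (brace_compat Br d (circ Br x y) (-x)) circN hlp.
by rewrite !circA (hd x).
Qed.

Lemma equiv_ext (k1 k2 : B -> B) : (forall x, k1 x = k2 x) ->
  equivariant Br k1 -> equivariant Br k2.
Proof. by move=> e h x y; rewrite -!e h. Qed.

Lemma gen d e (n : int) (hd : forall b, circ Br d b = circ Br b d) :
  fixedc e -> equivariant Br (fun x => circ Br d x - d + e + x *~ n).
Proof. by move=> he x y; rewrite sigmaD sigmaD sigmaMz fd // he. Qed.

Lemma cpowS c k : cpow Br c k.+1 = circ Br c (cpow Br c k).
Proof. by rewrite /cpow iterS. Qed.

Lemma cpow_c c (hc : forall b, circ Br c b = circ Br b c) k b :
  circ Br (cpow Br c k) b = circ Br b (cpow Br c k).
Proof.
elim: k b => [|k IH] b; first by rewrite /cpow /= circ1l circ1r.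
by rewrite cpowS -circA IH circA hc -circA.
Qed.

Lemma cpow2 c (h2 : forall b, (circ Br c b) *+ 2 = b *+ 2 + c *+ 2) k x :
  (circ Br (cpow Br c k) x) *+ 2 = x *+ 2 + (cpow Br c k) *+ 2.
Proof.
elim: k => [|k IH]; first by rewrite /cpow /= circ1l cone0 mul0rn addr0.
by rewrite cpowS -circA h2 IH h2 [RHS]addrA.
Qed.

Lemma fixed2 c (hc : forall b, circ Br c b = circ Br b c)
  (h2 : forall b, (circ Br c b) *+ 2 = b *+ 2 + c *+ 2) k :
  fixedc ((cpow Br c k) *+ 2).
Proof.
move=> x; rewrite sigmaMn /sigma mulrnBl -cpow_c // cpow2 //.
by rewrite addrC addKr.
Qed.

Lemma fixed_sum c (hc : forall b, circ Br c b = circ Br b c)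
  (h2 : forall b, (circ Br c b) *+ 2 = b *+ 2 + c *+ 2) (f : nat -> nat) a b :
  fixedc ((\sum_(a <= j < b) cpow Br c (f j)) *+ 2).
Proof.
rewrite -sumrMnl; apply: (big_ind fixedc); first exact: fixed0.
  exact: fixedD.
by move=> i _; apply: fixed2.
Qed.

End S.
Arguments gen {B Br}.
Arguments fixedc {B}.
Arguments equiv_ext {B Br}.
Arguments fixed2 {B Br}.
Arguments fixed_sum {B Br}.
Arguments cpow_c {B Br}.
Arguments fixedD {B Br}.
Arguments fixedN {B Br}.
Arguments sigmaD {B Br}.
Arguments sigmaMz {B Br}.
Arguments sigmaMn {B Br}.

Lemma hlp3 (B : zmodType) (A d S1 S2 : B) : A - d + (d *+ 2 + S1 - S2) = A + d + S1 - S2.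
Proof. by rewrite mulr2n !addrA subrK. Qed.
Lemma hlp4 (B : zmodType) (A d S1 S2 : B) : A - d + (S2 - S1) = A - d - S1 + S2.
Proof. by rewrite addrA addrAC. Qed.

Theorem mainTheorem5 (B : zmodType) (Br : brace B) (c : B)
  (hc : forall b, circ Br c b = circ Br b c) :
  (forall n : int, equivariant Br (fun x => circ Br c x - c + x *~ n)) /\
  ((forall b, (circ Br c b) *+ 2 = b *+ 2 + c *+ 2) ->
     (forall n : int, equivariant Br (fun x => circ Br c x + c + x *~ n)) /\
     (forall m : nat, (1 <= m)%N -> equivariant Br (fun x =>
        circ Br (cpow Br c (2 * m)) x + cpow Br c (2 * m)
        + (\sum_(1 <= j < m) cpow Br c (2 * j)) *+ 2
        - (\sum_(1 <= j < m.+1) cpow Br c (2 * j - 1)) *+ 2)) /\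
     (forall m : nat, (1 <= m)%N -> equivariant Br (fun x =>
        circ Br (cpow Br c (2 * m)) x - cpow Br c (2 * m)
        - (\sum_(1 <= j < m) cpow Br c (2 * j)) *+ 2
        + (\sum_(1 <= j < m.+1) cpow Br c (2 * j - 1)) *+ 2)) /\
     (forall (m : nat) (n : int), (1 <= m)%N -> equivariant Br (fun x =>
        c *+ (2 * m) + x *~ ((2 * m)%:Z + n)))).
Proof.
split.
  move=> n; apply: equiv_ext (gen _ _ n hc (@fixed0 _ Br)) => x.
  by rewrite addr0.
move=> h2.
have fc2 : fixedc Br (c *+ 2).
  by have := fixed2 _ hc h2 1; rewrite /cpow /= circ1r.
have hd m := cpow_c _ hc m.
split.
  move=> n; apply: equiv_ext (gen _ _ n hc fc2) => x.
  by rewrite mulr2n addrA subrK.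
split.
  move=> m _; set d := cpow Br c (2 * m).
  set S1 := (\sum_(1 <= j < m) _) *+ 2.
  set S2 := (\sum_(1 <= j < m.+1) _) *+ 2.
  have he : fixedc Br (d *+ 2 + S1 - S2).
    apply: fixedD; last apply: fixedN; last exact: (fixed_sum _ hc h2).
    apply: fixedD; [exact: (fixed2 _ hc h2) | exact: (fixed_sum _ hc h2)].
  apply: equiv_ext (gen _ _ 0 (hd (2 * m)%N) he) => x.
  by rewrite mulr0z addr0 hlp3.
split.
  move=> m _; set d := cpow Br c (2 * m).
  set S1 := (\sum_(1 <= j < m) _) *+ 2.
  set S2 := (\sum_(1 <= j < m.+1) _) *+ 2.
  have he : fixedc Br (S2 - S1).
    apply: fixedD; last apply: fixedN; exact: (fixed_sum _ hc h2).
  apply: equiv_ext (gen _ _ 0 (hd (2 * m)%N) he) => x.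
  by rewrite mulr0z addr0 hlp4.
move=> m n _ x y.
by rewrite sigmaD sigmaMz mulrnA sigmaMn fc2.
Qed.
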